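(* Consider a ROS~2 application executed on a single processor by the events executor with the two-queue mechanism described in the context, under the standing assumptions of the context. If $\tau_b$ is the currently running subtask and $\tau_a$ is any released but unscheduled subtask in the executor's queues, then their priorities satisfy $P_a \leq P_b$.
   Context: Model: a ROS~2 application is abstracted as a forest of trees of subtasks. Roots are released periodically/sporadically with known integer job priorities; a child subtask is released immediately when its parent completes, and inherits its parent's priority (fixed job-level priority). Execution is non-preemptive on a single processor; larger priority values mean higher priority. Executor mechanism: released root subtasks go into a priority queue (root_queue); a released child subtask is assigned the value latest_priority and pushed onto a LIFO queue (child_queue); at each scheduling decision (which occurs whenever the processor becomes free) the tops of the two queues are compared, the one of greater priority is popped and executed, and latest_priority is set to its priority. *)

(* Defs.v *)
From HB Require Import structures.
From mathcomp Require Import all_boot all_order all_algebra.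
Set Implicit Arguments. Unset Strict Implicit. Unset Printing Implicit Defensive.
Import Order.TTheory GRing.Theory Num.Theory.
Local Open Scope ring_scope.

(* A subtask instance (job of a subtask) is a pair (node, P) where node is a
   node of the forest of subtasks and P : int its (fixed, job-level) priority.
   Larger value = higher priority. *)
Notation inst V := (V * int)%type.

Definition child_insts (V : eqType) (children : V -> seq V) (x : inst V)
  : seq (inst V) := [seq (c, x.2) | c <- children x.1].

(* Executor state:
   - root_q  : content of the root priority queue (a multiset, order irrelevant)
   - child_q : child LIFO queue, head = top; each entry is (instance, value)
               where value is the latest_priority assigned at push time
   - latest  : the variable latest_priority
   - running : the subtask instance currently executing on the processor. *)
Record state (V : eqType) := State {
  root_q : seq (inst V);
  child_q : seq (inst V * int);
  latest : int;
  running : option (inst V) }.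

(* A scheduling decision (processor free): compare the top of the root
   priority queue (an element of maximal priority) with the top of the LIFO
   child queue (its assigned value), pop the one of greater priority (ties
   may go either way), run it and set latest_priority to its priority value.
   [sched_step s x s'] : in state s, instance x is selected, giving s'. *)
Inductive sched_step (V : eqType) : state V -> inst V -> state V -> Prop :=
| pick_root : forall rq1 x rq2 cq l,
    all (fun y : inst V => y.2 <= x.2) (rq1 ++ rq2) ->
    (forall c v cq', cq = (c, v) :: cq' -> v <= x.2) ->
    sched_step (State (rq1 ++ x :: rq2) cq l None) x
               (State (rq1 ++ rq2) cq x.2 (Some x))
| pick_child : forall rq x v cq l,
    all (fun y : inst V => y.2 <= v) rq ->
    sched_step (State rq ((x, v) :: cq) l None) x
               (State rq cq v (Some x)).

Inductive step (V : eqType) (children : V -> seq V) (is_root : pred V)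
  : state V -> state V -> Prop :=
| step_release : forall (r : V) (p : int) s,
    is_root r ->
    step children is_root s
      (State (root_q s ++ [:: (r, p)]) (child_q s) (latest s) (running s))
| step_complete : forall rq cq l b sc,
    (* the running instance b completes; its children are released and
       pushed (in some order) on the child LIFO queue with value
       latest_priority *)
    perm_eq sc (child_insts children b) ->
    step children is_root (State rq cq l (Some b))
      (State rq ([seq (c, l) | c <- rev sc] ++ cq) l None)
| step_schedule : forall s x s',
    sched_step s x s' -> step children is_root s s'.

Inductive reachable (V : eqType) (children : V -> seq V) (is_root : pred V)
  (l0 : int) : state V -> Prop :=
| reach_init : reachable children is_root l0 (State [::] [::] l0 None)
| reach_step : forall s s', reachable children is_root l0 s ->
    step children is_root s s' -> reachable children is_root l0 s'.

(* Released but unscheduled instances: those sitting in one of the queues. *)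
Definition queued (V : eqType) (s : state V) (a : inst V) : Prop :=
  a \in root_q s \/ exists v, (a, v) \in child_q s.

(* Main.v *)
Require Import Defs.
From mathcomp Require Import all_boot all_order all_algebra.
Import Order.TTheory GRing.Theory Num.Theory.
Local Open Scope ring_scope.
Set Implicit Arguments. Unset Strict Implicit.

Definition geR (u w : int) := w <= u.

Lemma geR_trans : transitive geR.
Proof. by move=> y x z; rewrite /geR => h1 h2; exact: le_trans h2 h1. Qed.

Definition Inv (V : eqType) (s : state V) : bool :=
  all (fun e : inst V * int => e.1.2 == e.2) (child_q s) &&
  sorted geR (map snd (child_q s)) &&
  (if running s is Some b then (latest s == b.2) &&
     all (fun e : inst V * int => e.2 <= latest s) (child_q s) else true).

Lemma top_bound (V : eqType) (cq : seq (inst V * int)) (c : inst V) (v : int) :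
  sorted geR (map snd ((c, v) :: cq)) ->
  all (fun e : inst V * int => e.2 <= v) cq.
Proof.
rewrite /= (path_sortedE geR_trans) => /andP [h _].
apply/allP => e he; move/allP: h => h; exact: (h _ (map_f snd he)).
Qed.

Lemma push_ok (V : eqType) (t cq : seq (inst V * int)) (l : int) :
  all (fun e : inst V * int => e.2 == l) t ->
  sorted geR (map snd cq) -> all (fun e : inst V * int => e.2 <= l) cq ->
  sorted geR (map snd (t ++ cq)) && all (fun e : inst V * int => e.2 <= l) (t ++ cq).
Proof.
elim: t => [|x t IH] /=; first by move=> _ -> ->.
move=> /andP [/eqP hx ht] hs ha.
have /andP [h1 h2] := IH ht hs ha.
rewrite (path_sortedE geR_trans) h1 h2 hx le_refl !andbT.
apply/allP => w /mapP [e he ->]; move/allP: h2 => h2; exact: h2 _ he.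
Qed.

Lemma sched_inv (V : eqType) (s s' : state V) (b : inst V) :
  @sched_step V s b s' -> Inv s -> Inv s'.
Proof.
case=> [rq1 x rq2 cq l hall htop | rq x v cq l hall]; rewrite /Inv /=.
- move=> /andP [/andP [h1 h2] _]; rewrite h1 h2 eqxx /=.
  case: cq htop h1 h2 => [//|[c v] cq] htop h1 h2.
  have hv := htop c v cq erefl.
  rewrite /= hv /=.
  apply/allP => e he; have := allP (top_bound h2) e he => hev.
  exact: le_trans hev hv.
- move=> /andP [/andP [/andP [/eqP h0 h1] h2] _]; rewrite h1 h0 eqxx /=.
  rewrite -h0; apply/andP; split; first by move: h2 => /path_sorted.
  move: h2; rewrite (path_sortedE geR_trans) => /andP [h _].
  apply/allP => e he; move/allP: h => h; rewrite h0; exact: (h _ (map_f (fun e => e.2) he)).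
Qed.

Lemma step_inv (V : eqType) children is_root (s s' : state V) :
  step children is_root s s' -> Inv s -> Inv s'.
Proof.
case=> [r p s0 _ | rq cq l b sc hp | s0 x s1 hs].
- by case: s0.
- rewrite /Inv /= => /andP [/andP [h1 h2] /andP [/eqP hl h3]].
  have ht : all (fun e : inst V * int => e.2 == l) [seq (c, l) | c <- rev sc].
    by apply/allP => e /mapP [c _ ->].
  have /andP [-> _] := push_ok ht h2 h3; rewrite all_cat h1 !andbT.
  apply/allP => e /mapP [c hc ->] /=; rewrite hl.
  rewrite mem_rev (perm_mem hp) in hc.
  by case/mapP: hc => d _ -> /=.
- exact: sched_inv hs.
Qed.

Lemma reach_inv (V : eqType) children is_root l0 (s : state V) :
  reachable children is_root l0 s -> Inv s.
Proof.
elim=> [|s0 s1 _ IH hst]; first by [].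
exact: step_inv hst IH.
Qed.

Theorem lemma3 (V : eqType) (children : V -> seq V) (is_root : pred V)
  (l0 : int) (s s' : state V) (b a : V * int) :
  reachable children is_root l0 s ->
  sched_step s b s' ->
  queued s' a ->
  a.2 <= b.2.
Proof.
move=> hr hs hq.
have hI' := sched_inv hs (reach_inv hr).
case: hq => [ha | [w hw]].
- case: hs ha hI' => [rq1 x rq2 cq l hall _ | rq x v cq l hall] /= ha.
  + by move=> _; exact: (allP hall).
  + rewrite /Inv /= => /andP [_ /andP [/eqP <- _]]; exact: (allP hall).
- move: hI'; rewrite /Inv; case: hs hw => [rq1 x rq2 cq l _ _ | rq x v cq l _] /= hw
    /andP [/andP [h1 _] /andP [/eqP hl h3]].
  + have /eqP -> := allP h1 _ hw; exact: (allP h3 _ hw).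
  + have /eqP -> := allP h1 _ hw; rewrite -hl; exact: (allP h3 _ hw).
Qed.
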